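(* Let $G$ be a group and $S\subset G$ a symmetric generating set containing the identity. (1) If $S$ is a determining set, then for any closed $S$-curve $\gamma_0$ based at $e$ there is a sequence $\gamma_1,\dots,\gamma_n$ of closed $S$-curves based at $e$ with $d_U^S(\gamma_{j-1},\gamma_j)\leq1$ for each $j\in\{1,\dots,n\}$ and $\gamma_n=(e)$. (2) If $N\in\mathbb{N}$ is such that for each closed $S$-curve $\gamma_0$ based at $e$ there is a sequence of closed $S$-curves $\gamma_1,\dots,\gamma_n$ based at $e$ with $d_U^S(\gamma_{j-1},\gamma_j)\leq N$ for each $j$ and $\gamma_n=(e)$, then $S^{N+1}$ is a determining set.
   Context: $S^k:=\{s_1\cdots s_k: s_j\in S\}$. A generating subset $S$ containing the identity is a determining set if $G$ has a presentation $\langle S\mid\mathcal{R}\rangle$ where every relator is a word of length $3$ in the letters $S\cup S^{-1}$. An $S$-curve is a finite sequence $(g_0,\dots,g_n)$ in $G$ with $g_{j-1}^{-1}g_j\in S$ for all $j$; it is closed based at $g_0$ if $g_0=g_n$. For $S$-curves $g=(g_0,\dots,g_n)$, $h=(h_0,\dots,h_m)$, $d_U^S(g,h)$ is the infimum of $r\in\mathbb{N}$ for which there is a relation $R\subset\{0,\dots,n\}\times\{0,\dots,m\}$ such that every $i\in\{0,\dots,n\}$ and every $j\in\{0,\dots,m\}$ appear in some pair of $R$; if $(i_1,j_1),(i_2,j_2)\in R$ and $i_1<i_2$ then $j_1\leq j_2$; and $g_i^{-1}h_j\in S^r$ for all $(i,j)\in R$. *)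

(* Defs.v *)
From Stdlib Require Import List Arith Lia.
Import ListNotations.

Record Group := {
  carrier :> Type;
  gmul : carrier -> carrier -> carrier;
  ginv : carrier -> carrier;
  gone : carrier;
  gmul_assoc : forall x y z, gmul x (gmul y z) = gmul (gmul x y) z;
  gmul_1l : forall x, gmul gone x = x;
  gmul_Vl : forall x, gmul (ginv x) x = gone
}.

Arguments gmul {g}.
Arguments ginv {g}.
Arguments gone {g}.

Section Defs.
Variable G : Group.

Definition symmetric (X : G -> Prop) : Prop := forall x, X x -> X (ginv x).

Fixpoint Spow (X : G -> Prop) (k : nat) : G -> Prop :=
  match k with
  | O => fun g => g = gone
  | Datatypes.S k' => fun g => exists a b, X a /\ Spow X k' b /\ g = gmul a b
  end.

(* Letters of S ∪ S^{-1}: (x, false) stands for x, (x, true) for x^{-1}. *)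
Definition letter := (G * bool)%type.
Definition eval_letter (l : letter) : G :=
  if snd l then ginv (fst l) else fst l.
Definition eval (w : list letter) : G :=
  fold_right (fun l acc => gmul (eval_letter l) acc) gone w.
Definition word_over (X : G -> Prop) (w : list letter) : Prop :=
  forall l, In l w -> X (fst l).

Definition generates (X : G -> Prop) : Prop :=
  forall g : G, exists w, word_over X w /\ eval w = g.

(* Equality in the group <X | R>: the congruence on words over X generated by
   free cancellation and the relators R (i.e. equality in F(X)/<<R>>). *)
Inductive wequiv (X : G -> Prop) (R : list letter -> Prop) :
    list letter -> list letter -> Prop :=
| weq_refl w : wequiv X R w w
| weq_sym u v : wequiv X R u v -> wequiv X R v u
| weq_trans u v w : wequiv X R u v -> wequiv X R v w -> wequiv X R u w
| weq_cancel u v x b : X x ->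
    wequiv X R (u ++ (x, b) :: (x, negb b) :: v) (u ++ v)
| weq_rel u v r : R r -> wequiv X R (u ++ r ++ v) (u ++ v).

(* G has the presentation <X | R> (via the tautological map X -> G). *)
Definition presents (X : G -> Prop) (R : list letter -> Prop) : Prop :=
  generates X /\
  (forall r, R r -> word_over X r /\ eval r = gone) /\
  (forall w, word_over X w -> eval w = gone -> wequiv X R w []).

Definition determining (X : G -> Prop) : Prop :=
  X gone /\ generates X /\
  exists R : list letter -> Prop,
    (forall r, R r -> length r = 3) /\ presents X R.

(* X-curves (g_0, ..., g_n), n >= 0, represented as nonempty lists. *)
Definition is_curve (X : G -> Prop) (c : list G) : Prop :=
  c <> [] /\
  forall j, 0 < j < length c ->
    X (gmul (ginv (nth (j - 1) c gone)) (nth j c gone)).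

Definition closed_curve_at_e (X : G -> Prop) (c : list G) : Prop :=
  is_curve X c /\ nth 0 c gone = gone /\ last c gone = gone.

(* d_U^X(g, h) <= N : the infimum over r in N of admissible r is at most N,
   i.e. some admissible r <= N exists. *)
Definition dU_le (X : G -> Prop) (g h : list G) (N : nat) : Prop :=
  exists r, r <= N /\
  exists Rel : nat -> nat -> Prop,
    (forall i j, Rel i j -> i < length g /\ j < length h) /\
    (forall i, i < length g -> exists j, Rel i j) /\
    (forall j, j < length h -> exists i, Rel i j) /\
    (forall i1 j1 i2 j2, Rel i1 j1 -> Rel i2 j2 -> i1 < i2 -> j1 <= j2) /\
    (forall i j, Rel i j ->
       Spow X r (gmul (ginv (nth i g gone)) (nth j h gone))).

Definition contractible (X : G -> Prop) (N : nat) (c0 : list G) : Prop :=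
  exists cs : list (list G),
    (forall c, In c cs -> closed_curve_at_e X c) /\
    (forall k, k < length cs ->
       dU_le X (nth k (c0 :: cs) []) (nth (Datatypes.S k) (c0 :: cs) []) N) /\
    last (c0 :: cs) [] = [gone].

End Defs.

Arguments symmetric {G}.
Arguments Spow {G}.
Arguments determining {G}.
Arguments closed_curve_at_e {G}.
Arguments contractible {G}.
Arguments generates {G}.

(* Main.v *)
Require Import Defs.
From Stdlib Require Import List Arith Lia.
Import ListNotations.

Arguments eval {G} _.
Arguments eval_letter {G} _.
Arguments word_over {G} _ _.
Arguments is_curve {G} _ _.
Arguments dU_le {G} _ _ _ _.
Arguments wequiv {G} _ _ _ _.
Arguments presents {G} _ _.

Section GL.
End GL.

Lemma mulVK {G : Group} (a b : G) : gmul (ginv a) (gmul a b) = b.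
Proof. rewrite gmul_assoc, gmul_Vl, gmul_1l. reflexivity. Qed.

Lemma mulV_r {G : Group} (x : G) : gmul x (ginv x) = gone.
Proof.
  rewrite <- (gmul_1l _ (gmul x (ginv x))).
  rewrite <- (gmul_Vl _ (ginv x)) at 1.
  rewrite <- gmul_assoc. rewrite (gmul_assoc _ (ginv x) x (ginv x)).
  rewrite gmul_Vl, gmul_1l, gmul_Vl. reflexivity.
Qed.

Lemma mul_1r {G : Group} (x : G) : gmul x gone = x.
Proof. rewrite <- (gmul_Vl _ x), gmul_assoc, mulV_r, gmul_1l. reflexivity. Qed.

Lemma mulKV {G : Group} (a b : G) : gmul a (gmul (ginv a) b) = b.
Proof. rewrite gmul_assoc, mulV_r, gmul_1l. reflexivity. Qed.

Lemma inv_uniq_l {G : Group} (u v : G) : gmul u v = gone -> u = ginv v.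
Proof.
  intro H. rewrite <- (mul_1r u), <- (mulV_r v), gmul_assoc, H, gmul_1l. reflexivity.
Qed.

Lemma inv_uniq_r {G : Group} (u v : G) : gmul u v = gone -> v = ginv u.
Proof.
  intro H. rewrite <- (mulVK u v), H, mul_1r. reflexivity.
Qed.

Lemma inv_inv {G : Group} (x : G) : ginv (ginv x) = x.
Proof. symmetry. apply inv_uniq_l. apply mulV_r. Qed.

Lemma inv_mul {G : Group} (a b : G) : ginv (gmul a b) = gmul (ginv b) (ginv a).
Proof.
  symmetry. apply inv_uniq_l. rewrite <- gmul_assoc, mulVK, gmul_Vl. reflexivity.
Qed.

Lemma inv_one {G : Group} : ginv (@gone G) = gone.
Proof. rewrite <- (mul_1r (ginv gone)). apply gmul_Vl. Qed.

Lemma invmul_cancel {G : Group} (p z : G) : gmul (ginv (gmul p z)) p = ginv z.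
Proof. rewrite inv_mul, <- gmul_assoc, gmul_Vl, mul_1r. reflexivity. Qed.

Lemma chain_mul {G : Group} (a b c : G) :
  gmul (gmul (ginv a) b) (gmul (ginv b) c) = gmul (ginv a) c.
Proof. rewrite <- gmul_assoc, mulKV. reflexivity. Qed.

Lemma Spow1 {G : Group} (S : G -> Prop) x : S x -> Spow S 1 x.
Proof. intro H. exists x, gone. simpl. rewrite mul_1r. auto. Qed.

Lemma Spow1_inv {G : Group} (S : G -> Prop) x : Spow S 1 x -> S x.
Proof. intros (a & b & Ha & Hb & ->). simpl in Hb. subst. rewrite mul_1r. auto. Qed.

Lemma Spow_succ {G : Group} (S : G -> Prop) : S gone ->
  forall k x, Spow S k x -> Spow S (Datatypes.S k) x.
Proof.
  intros He k. induction k as [|k IH]; intros x Hx.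
  - simpl in Hx. subst. exists gone, gone. simpl. rewrite gmul_1l. auto.
  - destruct Hx as (a & b & Ha & Hb & ->). exists a, b. auto.
Qed.

Lemma Spow_mono {G : Group} (S : G -> Prop) : S gone ->
  forall k m x, k <= m -> Spow S k x -> Spow S m x.
Proof.
  intros He k m x Hle. induction Hle; auto. intro H. apply Spow_succ; auto.
Qed.

Lemma Spow_e {G : Group} (S : G -> Prop) : S gone -> forall k, Spow S k gone.
Proof. intros He k. apply (Spow_mono S He 0). lia. reflexivity. Qed.

Lemma Spow_snoc {G : Group} (S : G -> Prop) :
  forall k b s, Spow S k b -> S s -> Spow S (Datatypes.S k) (gmul b s).
Proof.
  induction k as [|k IH]; intros b s Hb Hs.
  - simpl in Hb. subst. rewrite gmul_1l. apply Spow1. auto.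
  - destruct Hb as (a & b' & Ha & Hb' & ->). exists a, (gmul b' s).
    rewrite gmul_assoc. auto.
Qed.

Lemma Spow_inv {G : Group} (S : G -> Prop) : symmetric S ->
  forall k x, Spow S k x -> Spow S k (ginv x).
Proof.
  intros Hs. induction k as [|k IH]; intros x Hx.
  - simpl in *. subst. apply inv_one.
  - destruct Hx as (a & b & Ha & Hb & ->). rewrite inv_mul.
    apply Spow_snoc; auto.
Qed.

Lemma eval_app {G : Group} (u w : list (letter G)) : eval (u ++ w) = gmul (eval u) (eval w).
Proof.
  induction u as [|l u IH]; simpl.
  - rewrite gmul_1l. reflexivity.
  - rewrite IH, gmul_assoc. reflexivity.
Qed.

Lemma eval_app' {G : Group} (u w : list (G * bool)) : eval (u ++ w) = gmul (eval u) (eval w).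
Proof. apply eval_app. Qed.

Lemma word_over_app' {G : Group} (X : G -> Prop) (u w : list (G * bool)) :
  word_over X (u ++ w) <-> word_over X u /\ word_over X w.
Proof.
  unfold word_over. split.
  - intro H. split; intros l Hl; apply H; apply in_or_app; auto.
  - intros [H1 H2] l Hl. apply in_app_or in Hl. destruct Hl; auto.
Qed.

Lemma word_over_app {G : Group} (X : G -> Prop) u w :
  word_over X (u ++ w) <-> word_over X u /\ word_over X w.
Proof.
  unfold word_over. split.
  - intro H. split; intros l Hl; apply H; apply in_or_app; auto.
  - intros [H1 H2] l Hl. apply in_app_or in Hl. destruct Hl; auto.
Qed.

Lemma wequiv_ctx {G : Group} (X : G -> Prop) R u v a b :
  wequiv X R u v -> wequiv X R (a ++ u ++ b) (a ++ v ++ b).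
Proof.
  induction 1.
  - apply weq_refl.
  - apply weq_sym; auto.
  - eapply weq_trans; eauto.
  - pose proof (weq_cancel G X R (a ++ u) (v ++ b) x b0 H) as H'.
    repeat rewrite <- app_assoc in *. simpl in *. exact H'.
  - pose proof (weq_rel G X R (a ++ u) (v ++ b) r H) as H'.
    repeat rewrite <- app_assoc in *. simpl in *. exact H'.
Qed.

Lemma wequiv_app {G : Group} (X : G -> Prop) R u u' v v' :
  wequiv X R u u' -> wequiv X R v v' -> wequiv X R (u ++ v) (u' ++ v').
Proof.
  intros H1 H2. eapply weq_trans.
  - pose proof (wequiv_ctx X R u u' [] v H1) as H. simpl in H. exact H.
  - pose proof (wequiv_ctx X R v v' u' [] H2) as H. rewrite !app_nil_r in H. exact H.
Qed.

Definition R3 {G : Group} (X : G -> Prop) (r : list (letter G)) : Prop :=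
  length r = 3 /\ word_over X r /\ eval r = gone.

Lemma tri {G : Group} (X : G -> Prop) (x y z : G) :
  X x -> X y -> X z -> gmul x y = z ->
  wequiv X (R3 X) [(x,false);(y,false)] [(z,false)].
Proof.
  intros Hx Hy Hz Hxy.
  apply weq_trans with (v := [(x,false);(y,false)] ++ [(z,true);(z,false)]).
  - apply weq_sym.
    pose proof (weq_cancel G X (R3 X) [(x,false);(y,false)] [] z true Hz) as H.
    rewrite app_nil_r in H. exact H.
  - pose proof (weq_rel G X (R3 X) [] [(z,false)] [(x,false);(y,false);(z,true)]) as H.
    apply H. repeat split.
    + intros l Hl. simpl in Hl. destruct Hl as [<-|[<-|[<-|[]]]]; auto.
    + unfold eval, eval_letter. simpl. rewrite mul_1r, gmul_assoc, Hxy, mulV_r. reflexivity.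
Qed.

Lemma e_triv {G : Group} (X : G -> Prop) : X gone ->
  wequiv X (R3 X) [(gone,false)] [].
Proof.
  intros He.
  apply weq_trans with (v := [(gone,false)] ++ [(gone,false);(gone,true)]).
  - apply weq_sym.
    pose proof (weq_cancel G X (R3 X) [(gone,false)] [] gone false He) as H.
    rewrite app_nil_r in H. exact H.
  - pose proof (weq_rel G X (R3 X) [] [] [(gone,false);(gone,false);(gone,true)]) as H.
    apply H. repeat split.
    + intros l Hl. simpl in Hl. destruct Hl as [<-|[<-|[<-|[]]]]; auto.
    + unfold eval, eval_letter. simpl. rewrite mul_1r, inv_one, !gmul_1l. reflexivity.
Qed.

Lemma inv_letter {G : Group} (X : G -> Prop) (x : G) :
  X gone -> X x -> X (ginv x) ->
  wequiv X (R3 X) [(x,true)] [(ginv x,false)].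
Proof.
  intros He Hx Hx'. apply weq_sym.
  apply weq_trans with (v := [(ginv x,false);(x,false)] ++ [(x,true)]).
  - pose proof (weq_cancel G X (R3 X) [(ginv x,false)] [] x false Hx) as H.
    rewrite app_nil_r in H. apply weq_sym. exact H.
  - apply weq_trans with (v := [(gone,false)] ++ [(x,true)]).
    + apply wequiv_app. apply tri; auto. apply gmul_Vl. apply weq_refl.
    + apply (wequiv_app X (R3 X) [(gone,false)] [] [(x,true)] [(x,true)]).
      apply e_triv; auto. apply weq_refl.
Qed.

Lemma last_default {A : Type} (l : list A) d d' : l <> [] -> last l d = last l d'.
Proof.
  intro H. induction l as [|b l IH]. congruence.
  destruct l as [|c l]. reflexivity.
  change (last (c :: l) d = last (c :: l) d'). apply IH. discriminate.
Qed.

Lemma last_cons {A : Type} (b : A) q a : last (b :: q) a = last q b.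
Proof.
  destruct q as [|c q]. reflexivity.
  change (last (c :: q) a = last (c :: q) b). apply last_default. discriminate.
Qed.

Lemma last_app2 {A : Type} (q1 q2 : list A) a : last (q1 ++ q2) a = last q2 (last q1 a).
Proof.
  revert a. induction q1 as [|b q1 IH]; intro a; simpl; auto.
  change (last (b :: (q1 ++ q2)) a = last q2 (last (b :: q1) a)).
  rewrite !last_cons, IH. reflexivity.
Qed.

Lemma last_nth' {A : Type} (l : list A) d : last l d = nth (length l - 1) l d.
Proof.
  induction l as [|b l IH]; auto.
  rewrite last_cons. destruct l as [|c l]. reflexivity.
  rewrite (last_default _ b d) by discriminate. rewrite IH. simpl. rewrite Nat.sub_0_r. reflexivity.
Qed.

Fixpoint pts {G : Group} (a : G) (w : list (letter G)) : list G :=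
  match w with
  | [] => []
  | l :: w' => gmul a (eval_letter l) :: pts (gmul a (eval_letter l)) w'
  end.

Lemma pts_app {G : Group} (a : G) u w :
  pts a (u ++ w) = pts a u ++ pts (gmul a (eval u)) w.
Proof.
  revert a. induction u as [|l u IH]; intro a; simpl.
  - rewrite mul_1r. reflexivity.
  - rewrite IH, gmul_assoc. reflexivity.
Qed.

Lemma last_pts {G : Group} (a : G) w : last (pts a w) a = gmul a (eval w).
Proof.
  revert a. induction w as [|l w IH]; intro a.
  - simpl. rewrite mul_1r. reflexivity.
  - change (last (gmul a (eval_letter l) :: pts (gmul a (eval_letter l)) w) a
      = gmul a (gmul (eval_letter l) (eval w))).
    rewrite last_cons, IH, gmul_assoc. reflexivity.
Qed.

Fixpoint Spath {G : Group} (X : G -> Prop) (a : G) (q : list G) : Prop :=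
  match q with
  | [] => True
  | b :: q' => X (gmul (ginv a) b) /\ Spath X b q'
  end.

Lemma Spath_app {G : Group} (X : G -> Prop) a q1 q2 :
  Spath X a q1 -> Spath X (last q1 a) q2 -> Spath X a (q1 ++ q2).
Proof.
  revert a. induction q1 as [|b q1 IH]; intros a H1 H2; simpl in *; auto.
  destruct H1. split; auto. apply IH; auto. rewrite <- (last_cons b q1 a). auto.
Qed.

Lemma Spath_curve {G : Group} (X : G -> Prop) a q : Spath X a q -> is_curve X (a :: q).
Proof.
  split. discriminate.
  revert a H. induction q as [|b q IH]; intros a H j Hj; simpl in Hj. lia.
  destruct H as [H1 H2].
  destruct j as [|j]. lia. destruct j as [|j]. simpl. exact H1.
  specialize (IH b H2 (Datatypes.S j)). simpl in IH |- *.
  rewrite Nat.sub_0_r in IH. apply IH. lia.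
Qed.

Lemma curve_Spath {G : Group} (X : G -> Prop) a q : is_curve X (a :: q) -> Spath X a q.
Proof.
  revert a. induction q as [|b q IH]; intros a [_ H]; simpl; auto.
  split.
  - apply (H 1). simpl. lia.
  - apply IH. split. discriminate. intros j Hj.
    specialize (H (Datatypes.S j)). simpl in H.
    destruct j as [|j]. lia. simpl in Hj |- *. rewrite Nat.sub_0_r in *.
    apply H. lia.
Qed.

Lemma el_S {G : Group} (S : G -> Prop) (l : letter G) : symmetric S -> S (fst l) ->
  S (eval_letter l) /\ S (ginv (eval_letter l)).
Proof.
  intros Hs H. destruct l as [x b]; unfold eval_letter; simpl in *.
  destruct b; split; auto; try rewrite inv_inv; auto.
Qed.

Lemma Spath_pts {G : Group} (S : G -> Prop) a w : symmetric S -> word_over S w ->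
  Spath S a (pts a w).
Proof.
  revert a. induction w as [|l w IH]; intros a Hs Hw; simpl; auto.
  split.
  - rewrite mulVK. apply el_S; auto. apply Hw. left; auto.
  - apply IH; auto. intros l' Hl'. apply Hw. right; auto.
Qed.

Lemma curve_closed {G : Group} (S : G -> Prop) w : symmetric S -> word_over S w ->
  eval w = gone -> closed_curve_at_e S (gone :: pts gone w).
Proof.
  intros Hs Hw He. split; [|split].
  - apply Spath_curve. apply Spath_pts; auto.
  - reflexivity.
  - rewrite last_cons, last_pts, He, gmul_1l. reflexivity.
Qed.

Definition delta {G : Group} (a b : G) : letter G := (gmul (ginv a) b, false).

Fixpoint Wfrom {G : Group} (a : G) (q : list G) : list (letter G) :=
  match q with
  | [] => []
  | b :: q' => delta a b :: Wfrom b q'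
  end.

Lemma Wfrom_app {G : Group} (a : G) q1 q2 :
  Wfrom a (q1 ++ q2) = Wfrom a q1 ++ Wfrom (last q1 a) q2.
Proof.
  revert a. induction q1 as [|b q1 IH]; intro a. reflexivity.
  change (delta a b :: Wfrom b (q1 ++ q2) = (delta a b :: Wfrom b q1) ++ Wfrom (last (b :: q1) a) q2).
  rewrite IH, last_cons. reflexivity.
Qed.

Lemma pts_Wfrom {G : Group} (a : G) q : pts a (Wfrom a q) = q.
Proof.
  revert a. induction q as [|b q IH]; intro a; simpl; auto.
  unfold eval_letter; simpl. rewrite mulKV, IH. reflexivity.
Qed.

Lemma eval_Wfrom {G : Group} (a : G) q : eval (Wfrom a q) = gmul (ginv a) (last q a).
Proof.
  revert a. induction q as [|b q IH]; intro a.
  - simpl. rewrite gmul_Vl. reflexivity.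
  - change (gmul (eval_letter (delta a b)) (eval (Wfrom b q)) = gmul (ginv a) (last (b :: q) a)).
    rewrite IH, last_cons. unfold eval_letter; simpl. apply chain_mul.
Qed.

Lemma word_Wfrom {G : Group} (X : G -> Prop) a q : Spath X a q -> word_over X (Wfrom a q).
Proof.
  revert a. induction q as [|b q IH]; intros a H l Hl; simpl in *. destruct Hl.
  destruct H as [H1 H2]. destruct Hl as [<-|Hl]. exact H1. apply (IH b H2 l Hl).
Qed.

Lemma dU_fun {G : Group} (X : G -> Prop) (g h : list G) (f : nat -> nat) :
  (forall i, i < length g -> f i < length h) ->
  (forall j, j < length h -> exists i, i < length g /\ f i = j) ->
  (forall i1 i2, i1 < i2 -> i2 < length g -> f i1 <= f i2) ->
  (forall i, i < length g -> X (gmul (ginv (nth i g gone)) (nth (f i) h gone))) ->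
  dU_le X g h 1.
Proof.
  intros Hb Hs Hm Hd. exists 1. split. lia.
  exists (fun i j => i < length g /\ j = f i). repeat split.
  - tauto.
  - destruct H as [H ->]. auto.
  - intros i Hi. exists (f i). auto.
  - intros j Hj. destruct (Hs j Hj) as (i & Hi & <-). exists i. auto.
  - intros i1 j1 i2 j2 [H1 ->] [H2 ->] Hlt. apply Hm; auto.
  - intros i j [Hi ->]. apply Spow1. auto.
Qed.

Lemma splice {G : Group} (X : G -> Prop) (A M B : list G) :
  X gone -> A <> [] ->
  (forall x, In x M -> X (gmul (ginv x) (last A gone))) ->
  dU_le X (A ++ M ++ B) (A ++ B) 1.
Proof.
  intros He HA HM.
  assert (La : length A > 0) by (destruct A; simpl; [congruence|lia]).
  apply dU_fun with (f := fun i => if i <? length A then i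
                                  else if i <? length A + length M then length A - 1
                                  else i - length M);
  rewrite ?length_app.
  - intros i Hi. destruct (Nat.ltb_spec i (length A)); [lia|].
    destruct (Nat.ltb_spec i (length A + length M)); lia.
  - intros j Hj. destruct (Nat.ltb_spec j (length A)).
    + exists j. split. lia. destruct (Nat.ltb_spec j (length A)); lia.
    + exists (j + length M). split. lia.
      destruct (Nat.ltb_spec (j + length M) (length A)); [lia|].
      destruct (Nat.ltb_spec (j + length M) (length A + length M)); lia.
  - intros i1 i2 H12 H2.
    destruct (Nat.ltb_spec i1 (length A)); destruct (Nat.ltb_spec i2 (length A)); try lia;
    destruct (Nat.ltb_spec i1 (length A + length M)); try lia;
    destruct (Nat.ltb_spec i2 (length A + length M)); lia.
  - intros i Hi. destruct (Nat.ltb_spec i (length A)).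
    + rewrite !app_nth1 by lia. rewrite gmul_Vl. exact He.
    + rewrite app_nth2 by lia. destruct (Nat.ltb_spec i (length A + length M)).
      * rewrite app_nth1 by lia. rewrite app_nth1 by lia.
        rewrite <- last_nth'. apply HM. apply nth_In. lia.
      * rewrite app_nth2 by lia. rewrite app_nth2 by lia.
        replace (i - length A - length M) with (i - length M - length A) by lia.
        rewrite gmul_Vl. exact He.
Qed.

Lemma dU_sym {G : Group} (S : G -> Prop) g h n : symmetric S -> dU_le S g h n -> dU_le S h g n.
Proof.
  intros Hs (r & Hr & Rel & H1 & H2 & H3 & H4 & H5).
  exists r. split. auto. exists (fun j i => Rel i j). repeat split.
  - apply (H1 _ _ H). - apply (H1 _ _ H).
  - auto. - auto.
  - intros j1 i1 j2 i2 Ha Hb Hlt.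
    destruct (Nat.le_gt_cases i1 i2). auto.
    specialize (H4 _ _ _ _ Hb Ha H). lia.
  - intros j i H. specialize (H5 _ _ H). apply Spow_inv in H5; auto.
    rewrite inv_mul, inv_inv in H5. exact H5.
Qed.

Inductive Chain {G : Group} (S : G -> Prop) : list G -> list G -> Prop :=
| ch_refl c : closed_curve_at_e S c -> Chain S c c
| ch_step c d e : closed_curve_at_e S c -> dU_le S c d 1 -> Chain S d e -> Chain S c e.

Lemma Chain_closed_l {G : Group} (S : G -> Prop) c d : Chain S c d -> closed_curve_at_e S c.
Proof. destruct 1; auto. Qed.

Lemma Chain_closed_r {G : Group} (S : G -> Prop) c d : Chain S c d -> closed_curve_at_e S d.
Proof. induction 1; auto. Qed.

Lemma Chain_trans {G : Group} (S : G -> Prop) c d e : Chain S c d -> Chain S d e -> Chain S c e.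
Proof. induction 1; intros; auto. eapply ch_step; eauto. Qed.

Lemma Chain_snoc {G : Group} (S : G -> Prop) c d e :
  Chain S c d -> closed_curve_at_e S e -> dU_le S d e 1 -> Chain S c e.
Proof.
  intros H He Hd. apply Chain_trans with d; auto.
  apply ch_step with e; auto. eapply Chain_closed_r; eauto. apply ch_refl; auto.
Qed.

Lemma Chain_sym {G : Group} (S : G -> Prop) c d : symmetric S -> Chain S c d -> Chain S d c.
Proof.
  intros Hs. induction 1. apply ch_refl; auto.
  apply Chain_snoc with d; auto. apply dU_sym; auto.
Qed.

Lemma Chain_contr {G : Group} (S : G -> Prop) c d : Chain S c d ->
  exists cs, (forall x, In x cs -> closed_curve_at_e S x) /\
    (forall k, k < length cs -> dU_le S (nth k (c :: cs) []) (nth (Datatypes.S k) (c :: cs) []) 1) /\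
    last (c :: cs) [] = d.
Proof.
  induction 1.
  - exists []. simpl. split; [intros y []|]. split; auto. intros k Hk; lia.
  - destruct IHChain as (cs & K1 & K2 & K3). exists (d :: cs). split; [|split].
    + intros y [<-|Hy]; auto. eapply Chain_closed_l; eauto.
    + intros k Hk. destruct k as [|k]. simpl. auto.
      apply K2. simpl in Hk. lia.
    + rewrite last_cons in K3. rewrite !last_cons. exact K3.
Qed.

Lemma wequiv_pres {G : Group} (X : G -> Prop) R u v :
  (forall r, R r -> word_over X r /\ eval r = gone) ->
  wequiv X R u v -> (word_over X u <-> word_over X v) /\ eval u = eval v.
Proof.
  intros HR. induction 1.
  - tauto.
  - destruct IHwequiv. split; auto. tauto.
  - destruct IHwequiv1, IHwequiv2. split. tauto. congruence.
  - split.
    + rewrite !word_over_app'. split.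
      * intros [H1 H2]. split; auto. intros l Hl. apply H2. right; right; auto.
      * intros [H1 H2]. split; auto. intros l [<-|[<-|Hl]]; auto.
    + rewrite !eval_app'. simpl. f_equal. rewrite gmul_assoc.
      unfold eval_letter; destruct b; simpl; rewrite ?gmul_Vl, ?mulV_r, gmul_1l; reflexivity.
  - destruct (HR r H) as [Hw He]. split.
    + rewrite !word_over_app. tauto.
    + rewrite !eval_app, He, gmul_1l. reflexivity.
Qed.

Lemma splice_word {G : Group} (S : G -> Prop) (u m v : list (letter G)) :
  S gone -> eval m = gone ->
  (forall x, In x (pts (eval u) m) -> S (gmul (ginv x) (eval u))) ->
  dU_le S (gone :: pts gone (u ++ m ++ v)) (gone :: pts gone (u ++ v)) 1.
Proof.
  intros He Hm HM.
  rewrite !pts_app, Hm, mul_1r, gmul_1l.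
  apply (splice S (gone :: pts gone u) (pts (eval u) m) (pts (eval u) v)); auto.
  discriminate. rewrite last_cons, last_pts, gmul_1l. auto.
Qed.

Lemma chain_main {G : Group} (S : G -> Prop) R u v :
  symmetric S -> S gone ->
  (forall r, R r -> length r = 3 /\ word_over S r /\ eval r = gone) ->
  wequiv S R u v -> word_over S u -> eval u = gone ->
  Chain S (gone :: pts gone u) (gone :: pts gone v).
Proof.
  intros Hs He HR.
  assert (HR' : forall r, R r -> word_over S r /\ eval r = gone)
    by (intros r Hr; destruct (HR r Hr) as (_ & ? & ?); auto).
  induction 1; intros Hu Heu.
  - apply ch_refl. apply curve_closed; auto.
  - destruct (wequiv_pres S R u v HR' H) as [Hw Hev].
    apply Chain_sym; auto. apply IHwequiv. tauto. congruence.
  - destruct (wequiv_pres S R u v HR' H) as [Hw Hev].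
    apply Chain_trans with (gone :: pts gone v). auto. apply IHwequiv2. tauto. congruence.
  - pose proof (wequiv_pres S R _ _ HR' (weq_cancel G S R u v x b H)) as [Hw Hev].
    apply ch_step with (gone :: pts gone (u ++ v)).
    + apply curve_closed; auto.
    + assert (Hyy : gmul (eval_letter (x, b)) (eval_letter (x, negb b)) = gone)
        by (unfold eval_letter; destruct b; simpl; [apply gmul_Vl|apply mulV_r]).
      apply (splice_word S u [(x,b);(x,negb b)] v He).
      * simpl. rewrite mul_1r. exact Hyy.
      * intros y Hy. simpl in Hy. destruct Hy as [<-|[<-|[]]].
        -- rewrite invmul_cancel. apply el_S; auto;
           apply Hu; apply in_or_app; right; left; reflexivity.
        -- rewrite <- gmul_assoc, invmul_cancel, Hyy, inv_one. auto.
    + apply ch_refl. apply curve_closed; auto. apply Hw; auto. congruence.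
  - pose proof (wequiv_pres S R _ _ HR' (weq_rel G S R u v r H)) as [Hw Hev].
    destruct (HR r H) as (Hl & Hwr & Her).
    apply ch_step with (gone :: pts gone (u ++ v)).
    + apply curve_closed; auto.
    + apply (splice_word S u r v He Her).
      destruct r as [|l1 [|l2 [|l3 [|]]]]; simpl in Hl; try discriminate.
      simpl in Her. rewrite mul_1r, gmul_assoc in Her.
      assert (H3 : eval_letter l3 = ginv (gmul (eval_letter l1) (eval_letter l2)))
        by (apply inv_uniq_r; exact Her).
      intros y Hy. simpl in Hy. destruct Hy as [<-|[<-|[<-|[]]]].
      * rewrite invmul_cancel. apply el_S; auto; apply Hwr; left; auto.
      * rewrite <- gmul_assoc, invmul_cancel, <- H3. apply el_S; auto;
        apply Hwr; right; right; left; auto.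
      * rewrite <- !gmul_assoc, invmul_cancel, gmul_assoc, Her, inv_one. auto.
    + apply ch_refl. apply curve_closed; auto. apply Hw; auto. congruence.
Qed.

Lemma part1 {G : Group} (S : G -> Prop) :
  symmetric S -> S gone -> determining S ->
  forall c0, closed_curve_at_e S c0 -> contractible S 1 c0.
Proof.
  intros Hs He (_ & _ & R & HRl & _ & HRw & Hpres) c0 Hc0.
  destruct Hc0 as [[Hne Hcur] [H0 Hlast]].
  destruct c0 as [|a q]. congruence. simpl in H0. subst a.
  assert (Hsp : Spath S gone q) by (apply curve_Spath; split; auto).
  assert (Hw : word_over S (Wfrom gone q)) by (apply word_Wfrom; auto).
  assert (Hev : eval (Wfrom gone q) = gone).
  { rewrite eval_Wfrom, inv_one, gmul_1l. rewrite last_cons in Hlast. exact Hlast. }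
  assert (HR : forall r, R r -> length r = 3 /\ word_over S r /\ eval r = gone)
    by (intros r Hr; destruct (HRw r Hr); auto).
  pose proof (chain_main S R _ _ Hs He HR (Hpres _ Hw Hev) Hw Hev) as Hch.
  rewrite pts_Wfrom in Hch. simpl in Hch.
  destruct (Chain_contr S _ _ Hch) as (cs & H1 & H2 & H3).
  exists cs. auto.
Qed.

Lemma S_sub {G : Group} (S : G -> Prop) N x : S gone -> S x -> Spow S (Datatypes.S N) x.
Proof. intros He Hx. apply (Spow_mono S He 1). lia. apply Spow1; auto. Qed.

Lemma letter_path {G : Group} (S : G -> Prop) N : S gone ->
  forall k, k <= Datatypes.S N -> forall x a, Spow S k x ->
  exists q, Spath S a q /\ last q a = gmul a x /\
    wequiv (Spow S (Datatypes.S N)) (R3 (Spow S (Datatypes.S N))) [(x,false)] (Wfrom a q).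
Proof.
  intros He. induction k as [|k IH]; intros Hk x a Hx.
  - simpl in Hx. subst x. exists []. simpl. rewrite mul_1r. repeat split; auto.
    apply e_triv. exact (Spow_e S He (Datatypes.S N)).
  - destruct Hx as (s & y & Hs & Hy & ->).
    destruct (IH ltac:(lia) y (gmul a s) Hy) as (q & H1 & H2 & H3).
    exists (gmul a s :: q). split; [|split].
    + simpl. rewrite mulVK. auto.
    + rewrite last_cons, H2, gmul_assoc. reflexivity.
    + change (wequiv (Spow S (Datatypes.S N)) (R3 (Spow S (Datatypes.S N))) [(gmul s y, false)]
         ((gmul (ginv a) (gmul a s), false) :: Wfrom (gmul a s) q)).
      rewrite mulVK.
      apply weq_trans with (v := [(s,false)] ++ [(y,false)]).
      * apply weq_sym. apply tri.
        -- apply S_sub; auto.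
        -- exact (Spow_mono S He k (Datatypes.S N) y ltac:(lia) Hy).
        -- refine (Spow_mono S He (Datatypes.S k) (Datatypes.S N) (gmul s y) ltac:(lia) _).
           exists s, y; auto.
        -- reflexivity.
      * apply (wequiv_app _ _ [(s,false)] [(s,false)]). apply weq_refl. exact H3.
Qed.

Lemma word_path {G : Group} (S : G -> Prop) N : S gone -> symmetric S ->
  forall w a, word_over (Spow S (Datatypes.S N)) w ->
  exists q, Spath S a q /\ last q a = gmul a (eval w) /\
    wequiv (Spow S (Datatypes.S N)) (R3 (Spow S (Datatypes.S N))) w (Wfrom a q).
Proof.
  intros He Hs. induction w as [|l w IH]; intros a Hw.
  - exists []. simpl. rewrite mul_1r. repeat split; auto. apply weq_refl.
  - assert (Hl : Spow S (Datatypes.S N) (fst l)) by (apply Hw; left; auto).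
    assert (Hw' : word_over (Spow S (Datatypes.S N)) w) by (intros l' Hl'; apply Hw; right; auto).
    assert (Hlp : exists q, Spath S a q /\ last q a = gmul a (eval_letter l) /\
       wequiv (Spow S (Datatypes.S N)) (R3 (Spow S (Datatypes.S N))) [l] (Wfrom a q)).
    { destruct l as [x b]. destruct b; unfold eval_letter; cbn [fst snd] in *.
      - destruct (letter_path S N He (Datatypes.S N) (le_n _) (ginv x) a (Spow_inv S Hs _ _ Hl))
          as (q & H1 & H2 & H3).
        exists q. repeat split; auto. eapply weq_trans; [|exact H3].
        apply inv_letter; auto. apply Spow_e; auto. apply Spow_inv; auto.
      - apply (letter_path S N He (Datatypes.S N) (le_n _) x a Hl). }
    destruct Hlp as (q1 & H1 & H2 & H3).
    destruct (IH (gmul a (eval_letter l)) Hw') as (q2 & K1 & K2 & K3).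
    exists (q1 ++ q2). split; [|split].
    + apply Spath_app; auto. rewrite H2. auto.
    + rewrite last_app2, H2, K2. simpl. rewrite gmul_assoc. reflexivity.
    + rewrite Wfrom_app, H2. apply (wequiv_app _ _ [l] _ w). exact H3. exact K3.
Qed.

Definition Wi {G : Group} (c : list G) (k : nat) : list (letter G) :=
  map (fun t => delta (nth t c gone) (nth (Datatypes.S t) c gone)) (seq 0 k).

Lemma Wi_S {G : Group} (c : list G) k :
  Wi c (Datatypes.S k) = Wi c k ++ [delta (nth k c gone) (nth (Datatypes.S k) c gone)].
Proof. unfold Wi. rewrite seq_S, map_app. reflexivity. Qed.

Lemma Wfrom_Wi {G : Group} (a : G) q : Wfrom a q = Wi (a :: q) (length q).
Proof.
  revert a. induction q as [|b q IH]; intro a. reflexivity.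
  change (delta a b :: Wfrom b q = Wi (a :: b :: q) (Datatypes.S (length q))).
  rewrite IH. unfold Wi. simpl seq. simpl map.
  rewrite <- seq_shift, map_map. reflexivity.
Qed.

Lemma triD {G : Group} (X : G -> Prop) (a b c : G) :
  X (gmul (ginv a) b) -> X (gmul (ginv b) c) -> X (gmul (ginv a) c) ->
  wequiv X (R3 X) [delta a b; delta b c] [delta a c].
Proof. intros. apply tri; auto. apply chain_mul. Qed.

Lemma pred_step (Rel : nat -> nat -> Prop) n m :
  (forall i j, Rel i j -> i < n /\ j < m) ->
  (forall i, i < n -> exists j, Rel i j) ->
  (forall j, j < m -> exists i, Rel i j) ->
  (forall i1 j1 i2 j2, Rel i1 j1 -> Rel i2 j2 -> i1 < i2 -> j1 <= j2) ->
  forall i j, Rel i j -> i + j > 0 ->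
  (exists i', i = Datatypes.S i' /\ Rel i' j) \/
  (exists j', j = Datatypes.S j' /\ Rel i j') \/
  (exists i' j', i = Datatypes.S i' /\ j = Datatypes.S j' /\ Rel i' j').
Proof.
  intros HB HL HRt Hm i j Hij Hpos.
  destruct (HB _ _ Hij) as [Hi Hj].
  destruct i as [|i'].
  - destruct j as [|j']. lia.
    destruct (HRt j' ltac:(lia)) as [i'' Hi''].
    destruct i'' as [|i'']. right; left. eauto.
    exfalso. specialize (Hm _ _ _ _ Hij Hi'' ltac:(lia)). lia.
  - destruct (HL i' ltac:(lia)) as [j' Hj'].
    specialize (Hm _ _ _ _ Hj' Hij ltac:(lia)) as Hle.
    destruct (Nat.eq_dec j' j) as [<-|Hne]. left. eauto.
    destruct j as [|jj]. lia.
    destruct (Nat.eq_dec j' jj) as [<-|Hne2]. right; right. eauto.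
    destruct (HRt jj ltac:(lia)) as [i'' Hi''].
    destruct (Nat.lt_trichotomy i'' i') as [Hlt|[->|Hgt]].
    + exfalso. specialize (Hm _ _ _ _ Hi'' Hj' Hlt). lia.
    + right; right. eauto.
    + destruct (Nat.eq_dec i'' (Datatypes.S i')) as [->|Hne3].
      * right; left. eauto.
      * exfalso. specialize (Hm _ _ _ _ Hij Hi'' ltac:(lia)). lia.
Qed.

Lemma ladder {G : Group} (S : G -> Prop) N (c d : list G) :
  S gone -> is_curve S c -> is_curve S d ->
  nth 0 c gone = gone -> nth 0 d gone = gone ->
  last c gone = gone -> last d gone = gone -> dU_le S c d N ->
  wequiv (Spow S (Datatypes.S N)) (R3 (Spow S (Datatypes.S N)))
    (Wi c (length c - 1)) (Wi d (length d - 1)).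
Proof.
  intros He [Hcne Hc] [Hdne Hd] Hc0 Hd0 Hcl Hdl (r & Hr & Rel & HB & HL & HRt & Hm & HD).
  set (X := Spow S (Datatypes.S N)).
  assert (SX : forall x, S x -> X x) by (intros; apply S_sub; auto).
  assert (NX : forall x, Spow S N x -> X x)
    by (intros x Hx; exact (Spow_mono S He N (Datatypes.S N) x ltac:(lia) Hx)).
  assert (HN : forall i j, Rel i j -> Spow S N (gmul (ginv (nth i c gone)) (nth j d gone)))
    by (intros i j H; exact (Spow_mono S He r N _ Hr (HD i j H))).
  assert (stc : forall i, Datatypes.S i < length c ->
     S (gmul (ginv (nth i c gone)) (nth (Datatypes.S i) c gone))).
  { intros i Hi. specialize (Hc (Datatypes.S i) ltac:(lia)). simpl in Hc.
    rewrite Nat.sub_0_r in Hc. exact Hc. }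
  assert (std : forall i, Datatypes.S i < length d ->
     S (gmul (ginv (nth i d gone)) (nth (Datatypes.S i) d gone))).
  { intros i Hi. specialize (Hd (Datatypes.S i) ltac:(lia)). simpl in Hd.
    rewrite Nat.sub_0_r in Hd. exact Hd. }
  assert (claim : forall s i j, i + j = s -> Rel i j ->
    wequiv X (R3 X) (Wi c i ++ [delta (nth i c gone) (nth j d gone)]) (Wi d j)).
  { intro s. induction s as [s IH] using (well_founded_induction lt_wf).
    intros i j Hs Hij.
    destruct (HB _ _ Hij) as [Hi Hj].
    destruct (Nat.eq_dec s 0) as [->|Hs0].
    - assert (i = 0) as -> by lia. assert (j = 0) as -> by lia.
      unfold delta. rewrite Hc0, Hd0, gmul_Vl. simpl. apply e_triv. apply NX, Spow_e; auto.
    - destruct (pred_step Rel _ _ HB HL HRt Hm i j Hij ltac:(lia))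
        as [(i' & -> & Hp)|[(j' & -> & Hp)|(i' & j' & -> & -> & Hp)]].
      + specialize (IH (i' + j) ltac:(lia) i' j eq_refl Hp).
        rewrite Wi_S, <- app_assoc.
        eapply weq_trans; [|exact IH].
        apply (wequiv_app _ _ (Wi c i') (Wi c i') [_; _] [_]). apply weq_refl.
        apply triD; auto.
      + specialize (IH (i + j') ltac:(lia) i j' eq_refl Hp).
        rewrite Wi_S.
        apply weq_trans with (v := (Wi c i ++ [delta (nth i c gone) (nth j' d gone)])
                                   ++ [delta (nth j' d gone) (nth (Datatypes.S j') d gone)]).
        * rewrite <- app_assoc. apply (wequiv_app _ _ (Wi c i) (Wi c i) [_] [_; _]).
          apply weq_refl. apply weq_sym. apply triD; auto.
        * apply wequiv_app. exact IH. apply weq_refl.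
      + specialize (IH (i' + j') ltac:(lia) i' j' eq_refl Hp).
        rewrite !Wi_S, <- app_assoc.
        apply weq_trans with (v := Wi c i' ++ [delta (nth i' c gone) (nth (Datatypes.S j') d gone)]).
        { apply (wequiv_app _ _ (Wi c i') (Wi c i') [_; _] [_]). apply weq_refl.
          apply triD; auto. unfold X. rewrite <- chain_mul with (b := nth (Datatypes.S i') c gone).
          exists (gmul (ginv (nth i' c gone)) (nth (Datatypes.S i') c gone)),
                 (gmul (ginv (nth (Datatypes.S i') c gone)) (nth (Datatypes.S j') d gone)).
          auto. }
        apply weq_trans with (v := (Wi c i' ++ [delta (nth i' c gone) (nth j' d gone)])
                                   ++ [delta (nth j' d gone) (nth (Datatypes.S j') d gone)]).
        * rewrite <- app_assoc. apply (wequiv_app _ _ (Wi c i') (Wi c i') [_] [_; _]).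
          apply weq_refl. apply weq_sym. apply triD; auto.
          unfold X. rewrite <- chain_mul with (b := nth (Datatypes.S i') c gone).
          exists (gmul (ginv (nth i' c gone)) (nth (Datatypes.S i') c gone)),
                 (gmul (ginv (nth (Datatypes.S i') c gone)) (nth (Datatypes.S j') d gone)).
          auto.
        * apply wequiv_app. exact IH. apply weq_refl. }
  assert (Hend : Rel (length c - 1) (length d - 1)).
  { assert (Lc : length c > 0) by (destruct c; simpl; [congruence|lia]).
    assert (Ld : length d > 0) by (destruct d; simpl; [congruence|lia]).
    destruct (HL (length c - 1) ltac:(lia)) as [j Hj].
    destruct (HB _ _ Hj) as [_ Hjm].
    destruct (Nat.eq_dec j (length d - 1)) as [<-|Hne]. exact Hj.
    destruct (HRt (length d - 1) ltac:(lia)) as [i Hi].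
    destruct (HB _ _ Hi) as [Hin _].
    destruct (Nat.eq_dec i (length c - 1)) as [<-|Hne2]. exact Hi.
    exfalso. specialize (Hm _ _ _ _ Hi Hj ltac:(lia)). lia. }
  specialize (claim _ _ _ eq_refl Hend).
  rewrite <- !last_nth', Hcl, Hdl in claim. unfold delta in claim. rewrite gmul_Vl in claim.
  eapply weq_trans; [|exact claim].
  rewrite <- (app_nil_r (Wi c (length c - 1))) at 1.
  apply wequiv_app. apply weq_refl. apply weq_sym. apply e_triv. apply NX, Spow_e; auto.
Qed.

Lemma chainW {G : Group} (S : G -> Prop) N : S gone ->
  forall cs c0, closed_curve_at_e S c0 -> (forall c, In c cs -> closed_curve_at_e S c) ->
  (forall k, k < length cs -> dU_le S (nth k (c0 :: cs) []) (nth (Datatypes.S k) (c0 :: cs) []) N) ->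
  wequiv (Spow S (Datatypes.S N)) (R3 (Spow S (Datatypes.S N)))
    (Wi c0 (length c0 - 1)) (let c := last (c0 :: cs) [] in Wi c (length c - 1)).
Proof.
  intros He. induction cs as [|c1 cs IH]; intros c0 H0 Hcs Hk.
  - apply weq_refl.
  - apply weq_trans with (v := Wi c1 (length c1 - 1)).
    + destruct H0 as [A0 [B0 C0]]. destruct (Hcs c1 (or_introl eq_refl)) as [A1 [B1 C1]].
      apply ladder; auto. apply (Hk 0). simpl. lia.
    + change (last (c0 :: c1 :: cs) []) with (last (c1 :: cs) []).
      apply IH. apply Hcs; left; auto. intros c Hc; apply Hcs; right; auto.
      intros k Hkk. apply (Hk (Datatypes.S k)). simpl in *. lia.
Qed.

Lemma part2 {G : Group} (S : G -> Prop) :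
  symmetric S -> S gone -> generates S ->
  forall N : nat,
     (forall c0, closed_curve_at_e S c0 -> contractible S N c0) ->
     determining (Spow S (N + 1)).
Proof.
  intros Hs He Hgen N Hc.
  replace (N + 1) with (Datatypes.S N) by lia.
  set (X := Spow S (Datatypes.S N)).
  assert (SX : forall x, S x -> X x) by (intros; apply S_sub; auto).
  assert (Hgen' : generates X).
  { intro g. destruct (Hgen g) as (w & Hw & Hev). exists w. split; auto.
    intros l Hl. apply SX, Hw; auto. }
  split. exact (Spow_e S He _).
  split. exact Hgen'.
  exists (R3 X). split. intros r [Hr _]; exact Hr.
  split. exact Hgen'. split. intros r [_ Hr]; exact Hr.
  intros w Hw Hev.
  destruct (word_path S N He Hs w gone Hw) as (q & H1 & H2 & H3).
  rewrite Hev, mul_1r in H2.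
  assert (Hcl : closed_curve_at_e S (gone :: q)).
  { split; [|split]. apply Spath_curve; auto. reflexivity. rewrite last_cons. exact H2. }
  destruct (Hc _ Hcl) as (cs & K1 & K2 & K3).
  pose proof (chainW S N He cs _ Hcl K1 K2) as Hw'. cbv zeta in Hw'.
  rewrite K3 in Hw'. simpl in Hw'. rewrite Nat.sub_0_r, <- Wfrom_Wi in Hw'.
  eapply weq_trans. exact H3. exact Hw'.
Qed.

Theorem mainTheorem15 (G : Group) (S : G -> Prop)
  (HSsym : symmetric S) (HSe : S gone) (HSgen : generates S) :
  (determining S ->
     forall c0, closed_curve_at_e S c0 -> contractible S 1 c0) /\
  (forall N : nat,
     (forall c0, closed_curve_at_e S c0 -> contractible S N c0) ->
     determining (Spow S (N + 1))).
Proof.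
  split.
  - apply part1; auto.
  - apply part2; auto.
Qed.
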